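(* Let $X,Y$ be proper geodesic metric spaces and let $f:X\to Y$ be a stable embedding. Then the induced map $\partial f:\partial_MX\to\partial_MY$ on Morse boundaries is a homeomorphism onto its image. Moreover, if $f$ is the orbit map $g\mapsto g\cdot y_0$ of a finitely generated group $G$ (with a word metric) acting by isometries on $Y$, then $\partial f$ is $G$-equivariant.
   Context: A Morse gauge is a function $N:\mathbb{R}_{\geq 1}\times\mathbb{R}_{\geq 0}\to\mathbb{R}_{\geq 0}$; a (quasi)geodesic is $N$-Morse if every $(K,C)$-quasigeodesic with endpoints on it lies in its $N(K,C)$-neighborhood. A quasi-isometric embedding $f:X\to Y$ is a stable embedding if there is a Morse gauge $N$ such that any two points of $f(X)$ are joined by an $N$-Morse geodesic in $Y$. For a basepoint $e$, $X^{(N)}_e$ is the set of points $y$ with an $N$-Morse geodesic $[e,y]$, $\partial X^{(N)}_e$ its sequential Gromov boundary, and the Morse boundary $\partial_MX_e=\bigcup_N\partial X^{(N)}_e$ carries the direct limit topology over Morse gauges ordered pointwise (for proper spaces the basepoint only changes it by a natural homeomorphism). The induced map $\partial f$ sends the class of a sequence $(x_n)\subset X^{(N)}_e$ converging at infinity to the class of $(f(x_n))$. *)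

(* Defs.v *)
From Stdlib Require Import Reals List.
Open Scope R_scope.

Record MetricSpace := {
  pt :> Type;
  dist : pt -> pt -> R;
  dist_refl : forall x, dist x x = 0;
  dist_sep : forall x y, dist x y = 0 -> x = y;
  dist_sym : forall x y, dist x y = dist y x;
  dist_tri : forall x y z, dist x z <= dist x y + dist y z }.
Arguments dist {m} _ _.

Definition seq_conv {X : MetricSpace} (u : nat -> X) (l : X) : Prop :=
  forall eps, 0 < eps -> exists n0, forall n, (n0 <= n)%nat -> dist (u n) l < eps.

(* proper: closed balls are compact (= sequentially compact in a metric space) *)
Definition proper (X : MetricSpace) : Prop :=
  forall (x : X) (r : R) (u : nat -> X), (forall n, dist x (u n) <= r) ->
    exists (phi : nat -> nat) (l : X),
      (forall n, (phi n < phi (S n))%nat) /\ seq_conv (fun n => u (phi n)) l.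

Definition is_geodesic {X : MetricSpace} (g : R -> X) (L : R) : Prop :=
  0 <= L /\ forall s t, 0 <= s <= L -> 0 <= t <= L -> dist (g s) (g t) = Rabs (s - t).

Definition geodesic_from_to {X : MetricSpace} (g : R -> X) (x y : X) : Prop :=
  is_geodesic g (dist x y) /\ g 0 = x /\ g (dist x y) = y.

Definition geodesic_space (X : MetricSpace) : Prop :=
  forall x y : X, exists g : R -> X, geodesic_from_to g x y.

Definition is_quasigeodesic {X : MetricSpace} (K C : R) (s : R -> X) (a b : R) : Prop :=
  a <= b /\ forall t t', a <= t <= b -> a <= t' <= b ->
    Rabs (t - t') / K - C <= dist (s t) (s t') <= K * Rabs (t - t') + C.

Definition MorseGauge := R -> R -> R.
Definition is_gauge (N : MorseGauge) : Prop :=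
  forall K C, 1 <= K -> 0 <= C -> 0 <= N K C.

Definition on_image {X : MetricSpace} (g : R -> X) (L : R) (p : X) : Prop :=
  exists u, 0 <= u <= L /\ p = g u.

Definition is_morse {X : MetricSpace} (N : MorseGauge) (g : R -> X) (L : R) : Prop :=
  forall (K C : R) (s : R -> X) (a b : R), 1 <= K -> 0 <= C ->
    is_quasigeodesic K C s a b -> on_image g L (s a) -> on_image g L (s b) ->
    forall t, a <= t <= b -> exists u, 0 <= u <= L /\ dist (s t) (g u) <= N K C.

Definition morse_stratum_pt {X : MetricSpace} (N : MorseGauge) (e y : X) : Prop :=
  exists g : R -> X, geodesic_from_to g e y /\ is_morse N g (dist e y).

Definition qi_embedding {X Y : MetricSpace} (f : X -> Y) : Prop :=
  exists K C, 1 <= K /\ 0 <= C /\ forall x x' : X,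
    dist x x' / K - C <= dist (f x) (f x') <= K * dist x x' + C.

Definition stable_embedding {X Y : MetricSpace} (f : X -> Y) : Prop :=
  qi_embedding f /\
  exists N, is_gauge N /\ forall x x' : X,
    exists g : R -> Y, geodesic_from_to g (f x) (f x') /\ is_morse N g (dist (f x) (f x')).

Definition gromov_prod {X : MetricSpace} (e x y : X) : R :=
  (dist e x + dist e y - dist x y) / 2.

Definition conv_at_inf {X : MetricSpace} (e : X) (u : nat -> X) : Prop :=
  forall M, exists n0, forall i j, (n0 <= i)%nat -> (n0 <= j)%nat ->
    M <= gromov_prod e (u i) (u j).

Definition bequiv {X : MetricSpace} (e : X) (u v : nat -> X) : Prop :=
  forall M, exists n0, forall i j, (n0 <= i)%nat -> (n0 <= j)%nat ->
    M <= gromov_prod e (u i) (v j).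

Definition liminf_ge {X : MetricSpace} (e : X) (u v : nat -> X) (r : R) : Prop :=
  forall eps, 0 < eps -> exists n0, forall i j, (n0 <= i)%nat -> (n0 <= j)%nat ->
    r - eps <= gromov_prod e (u i) (v j).

(* u represents a point of the sequential boundary of X^(N)_e *)
Definition stratum_seq {X : MetricSpace} (N : MorseGauge) (e : X) (u : nat -> X) : Prop :=
  (forall n, morse_stratum_pt N e (u n)) /\ conv_at_inf e u.

(* u represents a point of the Morse boundary d_M X_e; points of d_M X_e are
   the bequiv-classes of such sequences *)
Definition MB_seq {X : MetricSpace} (e : X) (u : nat -> X) : Prop :=
  exists N, is_gauge N /\ stratum_seq N e u.

(* a subset of d_M X_e, given as a class-invariant predicate on representatives *)
Definition MB_saturated {X : MetricSpace} (e : X) (U : (nat -> X) -> Prop) : Prop :=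
  forall u v, MB_seq e u -> MB_seq e v -> bequiv e u v -> U u -> U v.

Definition stratum_nbhd {X : MetricSpace} (N : MorseGauge) (e : X) (u : nat -> X) (r : R)
  (v : nat -> X) : Prop :=
  exists u' v', stratum_seq N e u' /\ stratum_seq N e v' /\
    bequiv e u u' /\ bequiv e v v' /\ liminf_ge e u' v' r.

(* U meets d X^(N)_e in an open subset of d X^(N)_e *)
Definition stratum_open {X : MetricSpace} (N : MorseGauge) (e : X) (U : (nat -> X) -> Prop) : Prop :=
  forall u, stratum_seq N e u -> U u ->
    exists r, forall v, stratum_seq N e v -> stratum_nbhd N e u r v -> U v.

(* open sets of the direct limit topology on d_M X_e *)
Definition MB_open {X : MetricSpace} (e : X) (U : (nat -> X) -> Prop) : Prop :=
  MB_saturated e U /\ forall N, is_gauge N -> stratum_open N e U.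

Definition seqmap {X Y : Type} (f : X -> Y) (u : nat -> X) : nat -> Y := fun n => f (u n).

Definition boundary_map_homeo_onto_image {X Y : MetricSpace} (f : X -> Y) (e : X) : Prop :=
  (forall u, MB_seq e u -> MB_seq (f e) (seqmap f u)) /\
  (forall u v, MB_seq e u -> MB_seq e v -> bequiv e u v ->
     bequiv (f e) (seqmap f u) (seqmap f v)) /\
  (forall u v, MB_seq e u -> MB_seq e v -> bequiv (f e) (seqmap f u) (seqmap f v) ->
     bequiv e u v) /\
  (forall U, MB_open (f e) U -> MB_open e (fun u => U (seqmap f u))) /\
  (* open onto its image (with the subspace topology) *)
  (forall V, MB_open e V -> exists U, MB_open (f e) U /\
     forall u, MB_seq e u -> (V u <-> U (seqmap f u))).

Record Group := {
  gcar :> Type;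
  gmul : gcar -> gcar -> gcar;
  ginv : gcar -> gcar;
  gone : gcar;
  gmul_assoc : forall x y z, gmul x (gmul y z) = gmul (gmul x y) z;
  gmul_1l : forall x, gmul gone x = x;
  gmul_Vl : forall x, gmul (ginv x) x = gone }.
Arguments gmul {g} _ _.
Arguments ginv {g} _.
Arguments gone {g}.

Definition letter_val {G : Group} (l : bool * G) : G :=
  if fst l then snd l else ginv (snd l).
Definition word_val {G : Group} (w : list (bool * G)) : G :=
  fold_right (fun l acc => gmul (letter_val l) acc) gone w.
Definition word_over {G : Group} (S : list G) (w : list (bool * G)) : Prop :=
  forall l, In l w -> In (snd l) S.

Definition is_word_length {G : Group} (S : list G) (g : G) (n : nat) : Prop :=
  (exists w, word_over S w /\ word_val w = g /\ length w = n) /\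
  (forall w, word_over S w -> word_val w = g -> (n <= length w)%nat).

Definition isometric_action (G : Group) (X : MetricSpace) (act : G -> X -> X) : Prop :=
  (forall x, act gone x = x) /\
  (forall g h x, act (gmul g h) x = act g (act h x)) /\
  (forall g x y, dist (act g x) (act g y) = dist x y).

(* X (with the G-action actX and vertex map iota) is a model of the Cayley graph of
   G with respect to the finite generating list S: iota is G-equivariant, an isometric
   embedding of (G, word metric d_S), and every point is within 1/2 of a vertex *)
Definition cayley_model (G : Group) (S : list G) (X : MetricSpace)
  (actX : G -> X -> X) (iota : G -> X) : Prop :=
  isometric_action G X actX /\
  (forall g h, iota (gmul g h) = actX g (iota h)) /\
  (forall g h, exists n, is_word_length S (gmul (ginv g) h) n /\ dist (iota g) (iota h) = INR n) /\
  (forall x, exists g, dist x (iota g) <= 1 / 2).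

(* Main.v *)
Require Import Defs.
From Stdlib Require Import Reals List.
Open Scope R_scope.
From Stdlib Require Import Lra Lia ZArith Classical ClassicalEpsilon.
Require Import Defs.
Open Scope R_scope.

Lemma dist_nonneg {Z : MetricSpace} (x y : Z) : 0 <= dist x y.
Proof. pose proof (dist_tri Z x y x). rewrite (dist_refl Z x), (dist_sym Z y x) in H. lra. Qed.

Lemma dsym {Z : MetricSpace} (x y : Z) : dist x y = dist y x.
Proof. apply dist_sym. Qed.

Lemma dtri {Z : MetricSpace} (x y z : Z) : dist x z <= dist x y + dist y z.
Proof. apply dist_tri. Qed.

Lemma dref {Z : MetricSpace} (x : Z) : dist x x = 0.
Proof. apply dist_refl. Qed.

Lemma Rabs_pos_eq' a b : a <= b -> Rabs (a - b) = b - a.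
Proof. intros. rewrite Rabs_left1 by lra. lra. Qed.
Lemma Rabs_pos_eq'' a b : b <= a -> Rabs (a - b) = a - b.
Proof. intros. rewrite Rabs_right by lra. lra. Qed.

Lemma div_le a b K : 0 < K -> a <= b -> a / K <= b / K.
Proof. intros. unfold Rdiv. apply Rmult_le_compat_r; [left; apply Rinv_0_lt_compat; lra | lra]. Qed.

Lemma div_nonpos a K : 0 < K -> a <= 0 -> a / K <= 0.
Proof. intros. unfold Rdiv. replace 0 with (0 * / K) by ring.
  apply Rmult_le_compat_r; [left; apply Rinv_0_lt_compat; lra | lra]. Qed.

Lemma div_mul a K : 0 < K -> a / K * K = a.
Proof. intros. field. lra. Qed.

Lemma qi_inv a b K C : 0 < K -> a / K - C <= b -> a <= K * (b + C).
Proof. intros HK H. assert (a / K <= b + C) by lra.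
  apply (Rmult_le_compat_r K) in H0; [|lra]. rewrite div_mul in H0 by lra. lra. Qed.

Lemma qi_inv2 a b K C : 0 < K -> b <= K * a + C -> (b - C) / K <= a.
Proof. intros HK H. assert ((b - C) / K <= (K * a) / K) by (apply div_le; lra).
  replace (K * a / K) with a in H0 by (field; lra). lra. Qed.

Lemma geo_d {Z : MetricSpace} (g : R -> Z) x y s t :
  geodesic_from_to g x y -> 0 <= s <= dist x y -> 0 <= t <= dist x y ->
  dist (g s) (g t) = Rabs (s - t).
Proof. intros [[_ H] _] Hs Ht. apply H; auto. Qed.

Lemma geo_d_le {Z : MetricSpace} (g : R -> Z) x y s t :
  geodesic_from_to g x y -> 0 <= s <= dist x y -> 0 <= t <= dist x y -> s <= t ->
  dist (g s) (g t) = t - s.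
Proof. intros. rewrite (geo_d g x y s t) by auto. apply Rabs_pos_eq'; auto. Qed.

Lemma geo_from {Z : MetricSpace} (g : R -> Z) x y s :
  geodesic_from_to g x y -> 0 <= s <= dist x y -> dist x (g s) = s.
Proof. intros Hg Hs. pose proof Hg as [_ [H0 _]].
  pose proof (dist_nonneg x y).
  rewrite <- H0 at 1. rewrite (geo_d_le g x y 0 s); auto; lra. Qed.

Lemma geo_to {Z : MetricSpace} (g : R -> Z) x y s :
  geodesic_from_to g x y -> 0 <= s <= dist x y -> dist (g s) y = dist x y - s.
Proof. intros Hg Hs. pose proof Hg as [_ [_ H1]].
  pose proof (dist_nonneg x y).
  rewrite <- H1 at 1. rewrite (geo_d_le g x y s (dist x y)); auto; lra. Qed.

Lemma geo_is {Z : MetricSpace} (g : R -> Z) x y : geodesic_from_to g x y -> is_geodesic g (dist x y).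
Proof. intros [H _]; exact H. Qed.

Lemma geo_rev {Z : MetricSpace} (g : R -> Z) x y :
  geodesic_from_to g x y -> geodesic_from_to (fun t => g (dist x y - t)) y x.
Proof. intros [[HL H] [H0 H1]]. unfold geodesic_from_to, is_geodesic. rewrite (dsym y x). split; [split|split].
  - auto.
  - intros s t Hs Ht. rewrite H by lra. rewrite Rabs_minus_sym. f_equal. ring.
  - simpl. replace (dist x y - 0) with (dist x y) by ring. auto.
  - replace (dist x y - dist x y) with 0 by ring. auto. Qed.

Lemma gp_sym {Z : MetricSpace} (e x y : Z) : gromov_prod e x y = gromov_prod e y x.
Proof. unfold gromov_prod. rewrite (dsym x y). lra. Qed.

Lemma gp_nonneg {Z : MetricSpace} (e x y : Z) : 0 <= gromov_prod e x y.
Proof. unfold gromov_prod. pose proof (dtri x e y). rewrite (dsym x e) in H. lra. Qed.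

Lemma gp_le_d {Z : MetricSpace} (e x y : Z) : gromov_prod e x y <= dist e x.
Proof. unfold gromov_prod. pose proof (dtri e x y). lra. Qed.

Lemma gp_le_pt {Z : MetricSpace} (e x y : Z) g s :
  geodesic_from_to g x y -> 0 <= s <= dist x y -> gromov_prod e x y <= dist e (g s).
Proof. intros Hg Hs. unfold gromov_prod.
  pose proof (geo_from g x y s Hg Hs). pose proof (geo_to g x y s Hg Hs).
  pose proof (dtri e (g s) x). pose proof (dtri e (g s) y).
  rewrite (dsym (g s) x) in H1. lra. Qed.

Lemma gp_pert {Z : MetricSpace} (e a b b' : Z) :
  gromov_prod e a b - dist b b' <= gromov_prod e a b'.
Proof. unfold gromov_prod. pose proof (dtri e b' b). pose proof (dtri a b b').
  rewrite (dsym b' b) in H. lra. Qed.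

Lemma gp_close {Z : MetricSpace} (e x y : Z) gx gy s s' :
  geodesic_from_to gx e x -> geodesic_from_to gy e y ->
  0 <= s <= dist e x -> 0 <= s' <= dist e y ->
  (s + s' - dist (gx s) (gy s')) / 2 <= gromov_prod e x y.
Proof. intros Hx Hy Hs Hs'. unfold gromov_prod.
  pose proof (geo_to gx e x s Hx Hs). pose proof (geo_to gy e y s' Hy Hs').
  pose proof (dtri x (gx s) y). pose proof (dtri (gx s) (gy s') y).
  rewrite (dsym x (gx s)) in H1. lra. Qed.

Lemma morse_mono {Z : MetricSpace} (N N' : MorseGauge) (g : R -> Z) L :
  is_morse N g L -> (forall K C, 1 <= K -> 0 <= C -> N K C <= N' K C) -> is_morse N' g L.
Proof. intros H Hle K C s a b HK HC Hq Ha Hb t Ht.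
  destruct (H K C s a b HK HC Hq Ha Hb t Ht) as [u [Hu Hd]]. exists u. split; auto.
  pose proof (Hle K C HK HC). lra. Qed.

Lemma stratum_mono {Z : MetricSpace} (N N' : MorseGauge) (e y : Z) :
  morse_stratum_pt N e y -> (forall K C, 1 <= K -> 0 <= C -> N K C <= N' K C) -> morse_stratum_pt N' e y.
Proof. intros [g [Hg Hm]] Hle. exists g. split; auto. eapply morse_mono; eauto. Qed.

Definition gsum (N1 N2 : MorseGauge) : MorseGauge := fun K C => N1 K C + N2 K C.
Lemma gsum_gauge N1 N2 : is_gauge N1 -> is_gauge N2 -> is_gauge (gsum N1 N2).
Proof. intros H1 H2 K C HK HC. unfold gsum. pose proof (H1 K C HK HC). pose proof (H2 K C HK HC). lra. Qed.
Lemma gsum_l N1 N2 : is_gauge N2 -> forall K C, 1 <= K -> 0 <= C -> N1 K C <= gsum N1 N2 K C.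
Proof. intros H2 K C HK HC. unfold gsum. pose proof (H2 K C HK HC). lra. Qed.
Lemma gsum_r N1 N2 : is_gauge N1 -> forall K C, 1 <= K -> 0 <= C -> N2 K C <= gsum N1 N2 K C.
Proof. intros H1 K C HK HC. unfold gsum. pose proof (H1 K C HK HC). lra. Qed.


Definition clamp L t := Rmax 0 (Rmin L t).
Lemma clamp_in L t : 0 <= L -> 0 <= clamp L t <= L.
Proof. intros. unfold clamp, Rmax, Rmin. repeat destruct Rle_dec; lra. Qed.
Lemma clamp_id L t : 0 <= t <= L -> clamp L t = t.
Proof. intros. unfold clamp, Rmax, Rmin. repeat destruct Rle_dec; lra. Qed.
Lemma clamp_lip L s t : 0 <= L -> Rabs (clamp L s - clamp L t) <= Rabs (s - t).
Proof. intros. unfold clamp, Rmax, Rmin. repeat destruct Rle_dec;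
  unfold Rabs; repeat destruct Rcase_abs; lra. Qed.

Lemma nearest {Z : MetricSpace} (e : Z) (beta : R -> Z) L :
  is_geodesic beta L -> exists t0, 0 <= t0 <= L /\
    forall t, 0 <= t <= L -> dist e (beta t0) <= dist e (beta t).
Proof. intros [HL Hg].
  set (h := fun t => dist e (beta (clamp L t))).
  assert (Hc : forall c, continuity_pt h c).
  { intros c eps Heps. exists eps. split; [lra|]. intros x [_ Hx]. simpl in *. unfold R_dist in *.
    unfold h. pose proof (Hg (clamp L x) (clamp L c) (clamp_in L x HL) (clamp_in L c HL)).
    pose proof (clamp_lip L x c HL).
    pose proof (dtri e (beta (clamp L c)) (beta (clamp L x))).
    pose proof (dtri e (beta (clamp L x)) (beta (clamp L c))).
    rewrite (dsym (beta (clamp L c)) (beta (clamp L x))) in H1.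
    unfold Rabs in *. repeat destruct Rcase_abs; lra. }
  destruct (continuity_ab_min h 0 L HL (fun c _ => Hc c)) as [m [Hm Hmin]].
  exists m. split; auto. intros t Ht. pose proof (Hm t Ht). unfold h in H.
  rewrite !clamp_id in H by auto. auto. Qed.

Lemma proj_path {Z : MetricSpace} (e x y : Z) (beta rho : R -> Z) (t0 : R) :
  geodesic_from_to beta y x ->
  0 <= t0 <= dist y x ->
  (forall t, 0 <= t <= dist y x -> dist e (beta t0) <= dist e (beta t)) ->
  geodesic_from_to rho e (beta t0) ->
  exists sig : R -> Z,
    is_quasigeodesic 3 0 sig 0 (dist e (beta t0) + (dist y x - t0)) /\
    sig 0 = e /\ sig (dist e (beta t0) + (dist y x - t0)) = x /\
    (forall s, 0 <= s <= dist e (beta t0) -> sig s = rho s) /\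
    (forall s, dist e (beta t0) < s <= dist e (beta t0) + (dist y x - t0) ->
        exists t, 0 <= t <= dist y x /\ sig s = beta t).
Proof. intros Hb Ht0 Hmin Hr.
  pose proof (dist_nonneg e (beta t0)) as Hd0.
  set (sig := fun s => if Rle_dec s (dist e (beta t0)) then rho s else beta (t0 + (s - (dist e (beta t0))))).
  assert (Hmix : forall s t, 0 <= s <= (dist e (beta t0)) -> t0 <= t <= (dist y x) ->
     ((dist e (beta t0)) - s + (t - t0)) / 3 <= dist (rho s) (beta t) <= (dist e (beta t0)) - s + (t - t0)).
  { intros s t Hs Ht.
    pose proof (geo_from rho e (beta t0) s Hr Hs) as E1.
    pose proof (geo_to rho e (beta t0) s Hr Hs) as E2.
    pose proof (geo_d_le beta y x t0 t Hb ltac:(lra) ltac:(lra) ltac:(lra)) as E3.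
    pose proof (Hmin t ltac:(lra)) as E4.
    pose proof (dtri (rho s) (beta t0) (beta t)).
    pose proof (dtri e (rho s) (beta t)).
    pose proof (dtri (beta t0) (rho s) (beta t)).
    rewrite (dsym (beta t0) (rho s)) in H1. lra. }
  exists sig. split; [|split; [|split; [|split]]].
  - split. { lra. }
    intros s s' Hs Hs'. unfold sig.
    destruct (Rle_dec s (dist e (beta t0))); destruct (Rle_dec s' (dist e (beta t0))).
    + rewrite (geo_d rho e (beta t0) s s' Hr) by lra.
      pose proof (Rabs_pos (s - s')). lra.
    + rewrite (Rabs_pos_eq' s s') by lra.
      pose proof (Hmix s (t0 + (s' - (dist e (beta t0)))) ltac:(lra) ltac:(lra)). lra.
    + rewrite (Rabs_pos_eq'' s s') by lra. rewrite dsym.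
      pose proof (Hmix s' (t0 + (s - (dist e (beta t0)))) ltac:(lra) ltac:(lra)). lra.
    + rewrite (geo_d beta y x _ _ Hb) by lra.
      replace (t0 + (s - (dist e (beta t0))) - (t0 + (s' - (dist e (beta t0))))) with (s - s') by ring.
      pose proof (Rabs_pos (s - s')). lra.
  - unfold sig. destruct Rle_dec; [|lra]. destruct Hr as [_ [H _]]; auto.
  - unfold sig. destruct Rle_dec.
    + assert ((dist y x) - t0 = 0) by (lra).  replace ((dist e (beta t0)) + ((dist y x) - t0)) with (dist e (beta t0)) by lra.
      destruct Hr as [_ [_ H1]].  rewrite H1.
      destruct Hb as [_ [_ H2]].  replace t0 with (dist y x) by lra. auto.
    + replace (t0 + ((dist e (beta t0)) + ((dist y x) - t0) - (dist e (beta t0)))) with (dist y x) by ring. destruct Hb as [_ [_ H2]]. auto.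
  - intros s Hs. unfold sig. destruct Rle_dec; [auto|lra].
  - intros s Hs. unfold sig. destruct Rle_dec; [lra|]. exists (t0 + (s - (dist e (beta t0)))). split; [lra|auto].
Qed.

Lemma rev_haus {Z : MetricSpace} (N : MorseGauge) (alpha sig : R -> Z) L K C a b :
  is_gauge N -> 1 <= K -> 0 <= C -> is_geodesic alpha L ->
  is_morse N alpha L -> is_quasigeodesic K C sig a b ->
  sig a = alpha 0 -> sig b = alpha L ->
  forall u, 0 <= u <= L -> exists t, a <= t <= b /\ dist (alpha u) (sig t) <= 3 * N K C + K + C.
Proof. intros HN HK HC [HL Hg] Hm Hq Ha Hb u Hu.
  pose proof (HN K C HK HC) as HN0. set (N0 := N K C) in *.
  assert (Hmor : forall t, a <= t <= b -> exists v, 0 <= v <= L /\ dist (sig t) (alpha v) <= N0).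
  { intros t Ht. apply (Hm K C sig a b HK HC Hq); auto.
    - exists 0. split; [lra|auto].
    - exists L. split; [lra|auto]. }
  assert (Hab : a <= b) by (destruct Hq; auto).
  set (A := fun t => a <= t <= b /\ exists v, 0 <= v <= u /\ dist (sig t) (alpha v) <= N0).
  destruct (classic (A b)) as [HAb|HAb].
  - destruct HAb as [_ [v [Hv Hd]]]. exists b. split; [lra|].
    rewrite Hb in Hd. rewrite Hg in Hd by lra. rewrite Hb.
    rewrite Hg by lra. rewrite (Rabs_pos_eq'' L v) in Hd by lra.
    rewrite Rabs_pos_eq' by lra. pose proof (HN K C HK HC). lra.
  - assert (HAa : A a). { split; [lra|]. exists 0. split; [lra|]. rewrite Ha, dref. lra. }
    assert (Hbd : bound A). { exists b. intros t [Ht _]. lra. }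
    destruct (completeness A Hbd (ex_intro _ a HAa)) as [m [Hub Hlub]].
    assert (Hma : a <= m) by (apply Hub; auto).
    assert (Hmb : m <= b) by (apply Hlub; intros t [Ht _]; lra).
    assert (Ht1 : exists t1, A t1 /\ m - 1/2 < t1).
    { apply NNPP. intro Hn. assert (m <= m - 1/2); [|lra].
      apply Hlub. intros t Ht. apply Rnot_lt_le. intro Hlt. apply Hn. exists t. auto. }
    destruct Ht1 as [t1 [HA1 Hlt1]].
    assert (Ht1m : t1 <= m) by (apply Hub; auto).
    set (t2 := Rmin b (m + 1/2)).
    assert (Ht2 : m <= t2 <= b /\ t2 <= m + 1/2) by (unfold t2, Rmin; destruct Rle_dec; lra).
    assert (HnA2 : ~ A t2).
    { unfold t2, Rmin. destruct Rle_dec; auto. intro HA. pose proof (Hub _ HA). lra. }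
    destruct (Hmor t2 ltac:(lra)) as [v2 [Hv2 Hd2]].
    assert (Hv2u : u < v2).
    { apply Rnot_le_lt. intro Hle. apply HnA2. split; [lra|]. exists v2. split; [lra|auto]. }
    destruct HA1 as [Ht1ab [v1 [Hv1 Hd1]]].
    exists t1. split; [lra|].
    destruct Hq as [_ Hq].
    pose proof (Hq t1 t2 ltac:(lra) ltac:(lra)) as [_ Hq12].
    assert (Rabs (t1 - t2) <= 1) by (rewrite Rabs_pos_eq' by lra; lra).
    pose proof (dtri (alpha v1) (sig t1) (alpha v2)).
    pose proof (dtri (sig t1) (sig t2) (alpha v2)).
    rewrite (dsym (alpha v1) (sig t1)) in H0.
    rewrite Hg in H0 by lra. rewrite (Rabs_pos_eq' v1 v2) in H0 by lra.
    pose proof (dtri (alpha u) (alpha v1) (sig t1)).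
    rewrite Hg in H2 by lra. rewrite (Rabs_pos_eq'' u v1) in H2 by lra.
    rewrite (dsym (alpha v1) (sig t1)) in H2.
    assert (K * Rabs (t1 - t2) <= K * 1) by (apply Rmult_le_compat_l; lra).
    lra.
Qed.


Lemma on_img0 {Z : MetricSpace} (g : R -> Z) x y : geodesic_from_to g x y -> on_image g (dist x y) x.
Proof. intros [_ [H0 _]]. exists 0. split; [split; [lra| apply dist_nonneg]|auto]. Qed.
Lemma on_img1 {Z : MetricSpace} (g : R -> Z) x y : geodesic_from_to g x y -> on_image g (dist x y) y.
Proof. intros [_ [_ H1]]. exists (dist x y). pose proof (dist_nonneg x y). split; [lra|auto]. Qed.

Lemma proj_path_rev {Z : MetricSpace} (e x y : Z) (beta rho : R -> Z) (t0 : R) :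
  geodesic_from_to beta y x ->
  0 <= t0 <= dist y x ->
  (forall t, 0 <= t <= dist y x -> dist e (beta t0) <= dist e (beta t)) ->
  geodesic_from_to rho e (beta t0) ->
  exists sig : R -> Z,
    is_quasigeodesic 3 0 sig 0 (dist e (beta t0) + t0) /\
    sig 0 = e /\ sig (dist e (beta t0) + t0) = y /\
    (forall s, 0 <= s <= dist e (beta t0) -> sig s = rho s) /\
    (forall s, dist e (beta t0) < s <= dist e (beta t0) + t0 ->
        exists t, 0 <= t <= dist y x /\ sig s = beta t).
Proof. intros Hb Ht0 Hmin Hr.
  pose proof (geo_rev beta y x Hb) as Hb'.
  assert (Heq : beta (dist y x - (dist x y - t0)) = beta t0).
  { f_equal. rewrite (dsym x y). ring. }
  assert (Ht0' : 0 <= dist x y - t0 <= dist x y) by (rewrite (dsym x y); lra).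
  assert (Hmin' : forall t, 0 <= t <= dist x y ->
      dist e ((fun t => beta (dist y x - t)) (dist x y - t0)) <= dist e ((fun t => beta (dist y x - t)) t)).
  { intros t Ht. simpl. rewrite Heq. apply Hmin. rewrite (dsym x y) in Ht. lra. }
  assert (Hr' : geodesic_from_to rho e ((fun t => beta (dist y x - t)) (dist x y - t0))).
  { simpl. rewrite Heq. auto. }
  destruct (proj_path e y x _ rho _ Hb' Ht0' Hmin' Hr') as [sig [H1 [H2 [H3 [H4 H5]]]]].
  simpl in *. rewrite Heq in *.
  replace (dist x y - (dist x y - t0)) with t0 in * by ring.
  exists sig. split; [|split; [|split; [|split]]]; auto.
  intros s Hs. destruct (H5 s Hs) as [t [Ht Hst]]. exists (dist y x - t).
  rewrite (dsym x y) in Ht. split; [lra|auto].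
Qed.

Lemma tripod {Z : MetricSpace} (e x y : Z) N beta t0 : geodesic_space Z -> is_gauge N ->
  morse_stratum_pt N e x -> morse_stratum_pt N e y ->
  geodesic_from_to beta y x -> 0 <= t0 <= dist y x ->
  (forall t, 0 <= t <= dist y x -> dist e (beta t0) <= dist e (beta t)) ->
  dist e (beta t0) - 2 * N 3 0 <= gromov_prod e x y.
Proof. intros HZ HN [ax [Hax Hmx]] [ay [Hay Hmy]] Hb Ht0 Hmin.
  destruct (HZ e (beta t0)) as [rho Hr].
  pose proof (dist_nonneg e (beta t0)) as Hd0.
  pose proof (HN 3 0 ltac:(lra) ltac:(lra)) as HN0.
  destruct (proj_path e x y beta rho t0 Hb Ht0 Hmin Hr) as [sx [Q1 [Q2 [Q3 [Q4 _]]]]].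
  destruct (proj_path_rev e x y beta rho t0 Hb Ht0 Hmin Hr) as [sy [R1 [R2 [R3 [R4 _]]]]].
  assert (Hq : rho (dist e (beta t0)) = beta t0) by (destruct Hr as [_ [_ H]]; auto).
  destruct (Hmx 3 0 sx 0 _ ltac:(lra) ltac:(lra) Q1) with (t := dist e (beta t0)) as [v [Hv Hdv]].
  { rewrite Q2. destruct Hax as [_ [Hz0 _]]. exists 0. split; [split; [lra|apply dist_nonneg]|auto]. }
  { rewrite Q3. apply (on_img1 ax e x Hax). }
  { pose proof (dist_nonneg y x). lra. }
  destruct (Hmy 3 0 sy 0 _ ltac:(lra) ltac:(lra) R1) with (t := dist e (beta t0)) as [w [Hw Hdw]].
  { rewrite R2. destruct Hay as [_ [Hz0 _]]. exists 0. split; [split; [lra|apply dist_nonneg]|auto]. }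
  { rewrite R3. apply (on_img1 ay e y Hay). }
  { lra. }
  rewrite Q4 in Hdv by lra. rewrite R4 in Hdw by lra. rewrite Hq in Hdv, Hdw.
  pose proof (geo_from ax e x v Hax Hv). pose proof (geo_to ax e x v Hax Hv).
  pose proof (geo_from ay e y w Hay Hw). pose proof (geo_to ay e y w Hay Hw).
  pose proof (geo_from beta y x t0 Hb Ht0). pose proof (geo_to beta y x t0 Hb Ht0).
  pose proof (dtri e (ax v) (beta t0)). pose proof (dtri (beta t0) (ax v) x).
  pose proof (dtri e (ay w) (beta t0)). pose proof (dtri (beta t0) (ay w) y).
  rewrite (dsym (ax v) (beta t0)) in H5. rewrite (dsym (ay w) (beta t0)) in H7.
  rewrite (dsym y (beta t0)) in H3.
  unfold gromov_prod. rewrite (dsym x y). lra.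
Qed.

Definition c0 (N : MorseGauge) := 3 * N 3 0 + 3 + 1.
Definition DD (N : MorseGauge) := 2 * (3 * N 3 0 + 3 + N 3 0).
Definition delta (N : MorseGauge) := c0 N + DD N.

Lemma fellow {Z : MetricSpace} (e x y : Z) N ax ay s : geodesic_space Z -> is_gauge N ->
  geodesic_from_to ax e x -> is_morse N ax (dist e x) ->
  geodesic_from_to ay e y -> is_morse N ay (dist e y) ->
  0 <= s -> s <= gromov_prod e x y - c0 N ->
  dist (ax s) (ay s) <= DD N.
Proof. intros HZ HN Hax Hmx Hay Hmy Hs Hsg. unfold c0, DD in *.
  pose proof (HN 3 0 ltac:(lra) ltac:(lra)) as HN0.
  destruct (HZ y x) as [beta Hb].
  destruct (nearest e beta (dist y x) (geo_is beta y x Hb)) as [t0 [Ht0 Hmin]].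
  destruct (HZ e (beta t0)) as [rho Hr].
  pose proof (dist_nonneg e (beta t0)) as Hd0.
  destruct (proj_path e x y beta rho t0 Hb Ht0 Hmin Hr) as [sx [Q1 [Q2 [Q3 [Q4 Q5]]]]].
  destruct (proj_path_rev e x y beta rho t0 Hb Ht0 Hmin Hr) as [sy [R1 [R2 [R3 [R4 _]]]]].
  assert (Hgp : gromov_prod e x y <= dist e (beta t0)).
  { rewrite gp_sym. apply (gp_le_pt e y x beta t0 Hb Ht0). }
  pose proof (gp_le_d e x y). pose proof (gp_le_d e y x). rewrite gp_sym in H0.
  destruct (rev_haus N ax sx (dist e x) 3 0 0 (dist e (beta t0) + (dist y x - t0)) HN
    ltac:(lra) ltac:(lra) (geo_is ax e x Hax) Hmx Q1) with (u := s) as [t [Ht Hd]].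
  { rewrite Q2. destruct Hax as [_ [Hz0 _]]; auto. }
  { rewrite Q3. destruct Hax as [_ [_ Hz0]]; auto. }
  { lra. }
  assert (Htd : t <= dist e (beta t0)).
  { apply Rnot_lt_le. intro Hlt. destruct (Q5 t ltac:(lra)) as [tau [Htau Hst]].
    pose proof (Hmin tau Htau). pose proof (geo_from ax e x s Hax ltac:(lra)).
    pose proof (dtri e (ax s) (sx t)) as Htr. rewrite Hst in Htr, Hd. lra. }
  rewrite Q4 in Hd by lra.
  destruct (Hmy 3 0 sy 0 _ ltac:(lra) ltac:(lra) R1) with (t := t) as [v [Hv Hdv]].
  { rewrite R2. destruct Hay as [_ [Hz0 _]]. exists 0. split; [split; [lra|apply dist_nonneg]|auto]. }
  { rewrite R3. apply (on_img1 ay e y Hay). }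
  { lra. }
  rewrite R4 in Hdv by lra.
  pose proof (geo_from ax e x s Hax ltac:(lra)) as E1.
  pose proof (geo_from ay e y v Hay Hv) as E2.
  pose proof (dtri (ax s) (rho t) (ay v)) as T1.
  pose proof (dtri e (ax s) (ay v)) as T2. pose proof (dtri e (ay v) (ax s)) as T3.
  rewrite (dsym (ay v) (ax s)) in T3.
  pose proof (dtri (ax s) (ay v) (ay s)) as T4.
  rewrite (geo_d ay e y v s Hay Hv ltac:(lra)) in T4.
  unfold Rabs in *. destruct Rcase_abs; lra.
Qed.

Lemma four_point {Z : MetricSpace} N (e x y z : Z) : geodesic_space Z -> is_gauge N ->
  morse_stratum_pt N e x -> morse_stratum_pt N e y -> morse_stratum_pt N e z ->
  Rmin (gromov_prod e x y) (gromov_prod e y z) - delta N <= gromov_prod e x z.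
Proof. intros HZ HN [ax [Hax Hmx]] [ay [Hay Hmy]] [az [Haz Hmz]].
  pose proof (HN 3 0 ltac:(lra) ltac:(lra)) as HN0.
  pose proof (gp_nonneg e x z).
  set (m := Rmin (gromov_prod e x y) (gromov_prod e y z)).
  assert (Hm1 : m <= gromov_prod e x y) by apply Rmin_l.
  assert (Hm2 : m <= gromov_prod e y z) by apply Rmin_r.
  unfold delta, c0, DD in *.
  destruct (Rlt_or_le (m - c0 N) 0) as [Hlt|Hge]; unfold c0 in *.
  - lra.
  - set (s := m - (3 * N 3 0 + 3 + 1)).
    pose proof (fellow e y x N ay ax s HZ HN Hay Hmy Hax Hmx ltac:(unfold s; lra)
       ltac:(unfold c0, s; rewrite gp_sym; lra)) as F1.
    pose proof (fellow e y z N ay az s HZ HN Hay Hmy Haz Hmz ltac:(unfold s; lra)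
       ltac:(unfold c0, s; lra)) as F2.
    unfold DD in *.
    pose proof (gp_le_d e x y). pose proof (gp_le_d e z y). rewrite (gp_sym e z y) in H1.
    pose proof (gp_close e x z ax az s s Hax Haz ltac:(unfold s; lra) ltac:(unfold s; lra)).
    pose proof (dtri (ax s) (ay s) (az s)). rewrite (dsym (ax s) (ay s)) in H3.
    unfold s in *. lra.
Qed.


Definition QIdata {X Y : MetricSpace} (f : X -> Y) K C (N : MorseGauge) :=
  1 <= K /\ 0 <= C /\ (forall x x', dist x x' / K - C <= dist (f x) (f x') <= K * dist x x' + C) /\
  is_gauge N /\ (forall x x', exists g, geodesic_from_to g (f x) (f x') /\ is_morse N g (dist (f x) (f x'))).

Lemma stable_QI {X Y : MetricSpace} (f : X -> Y) : stable_embedding f -> exists K C N, QIdata f K C N.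
Proof. intros [[K [C [HK [HC H]]]] [N [HN Hg]]]. exists K, C, N. repeat split; auto; apply H. Qed.

Lemma img_stratum {X Y : MetricSpace} (f : X -> Y) K C N : QIdata f K C N ->
  forall x x', morse_stratum_pt N (f x) (f x').
Proof. intros (_ & _ & _ & _ & H) x x'. apply H. Qed.

Lemma img_qg {X Y : MetricSpace} (f : X -> Y) K C N (g : R -> X) x y : QIdata f K C N ->
  geodesic_from_to g x y -> is_quasigeodesic K C (fun t => f (g t)) 0 (dist x y).
Proof. intros (HK & HC & Hq & _) Hg. split; [apply dist_nonneg|].
  intros t t' Ht Ht'. rewrite <- (geo_d g x y t t' Hg Ht Ht'). apply Hq. Qed.

Lemma img_qg2 {X Y : MetricSpace} (f : X -> Y) K C N (s : R -> X) K' C' a b : QIdata f K C N ->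
  1 <= K' -> 0 <= C' ->
  is_quasigeodesic K' C' s a b -> is_quasigeodesic (K * K') (K * C' + C) (fun t => f (s t)) a b.
Proof. intros (HK & HC & Hq & _) HK' HC' [Hab Hs]. split; auto.
  intros t t' Ht Ht'. destruct (Hs t t' Ht Ht') as [L1 L2]. destruct (Hq (s t) (s t')) as [Q1 Q2].
  pose proof (Rabs_pos (t - t')) as Ha. split.
  - assert (Rabs (t - t') / K' - C' <= dist (s t) (s t')) by lra.
    apply (div_le _ _ K) in H; [|lra].
    replace ((Rabs (t - t') / K' - C') / K) with (Rabs (t - t') / (K * K') - C' / K) in H by (field; lra).
    assert (C' / K <= K * C').
    { apply (Rmult_le_reg_r K); [lra|]. rewrite div_mul by lra.
      assert (1 <= K * K) by nra. nra. }
    lra.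
  - assert (K * dist (s t) (s t') <= K * (K' * Rabs (t - t') + C')) by (apply Rmult_le_compat_l; lra).
    lra.
Qed.

Definition RH (N : MorseGauge) K C := 3 * N K C + K + C.

Lemma LB {X Y : MetricSpace} (f : X -> Y) K C N : geodesic_space X -> geodesic_space Y ->
  QIdata f K C N -> forall e x y,
  gromov_prod e x y / K - (C + RH N K C + 2 * N 3 0) <= gromov_prod (f e) (f x) (f y).
Proof. intros HX HY HQ e x y. pose proof HQ as (HK & HC & Hq & HN & Hst).
  destruct (Hst y x) as [beta [Hb Hbm]].
  destruct (nearest (f e) beta _ (geo_is beta _ _ Hb)) as [t0 [Ht0 Hmin]].
  pose proof (tripod (f e) (f x) (f y) N beta t0 HY HN (img_stratum f K C N HQ e x)
     (img_stratum f K C N HQ e y) Hb Ht0 Hmin) as T.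
  destruct (HX y x) as [g Hg].
  destruct (rev_haus N beta (fun t => f (g t)) (dist (f y) (f x)) K C 0 (dist y x) HN HK HC
     (geo_is beta _ _ Hb) Hbm (img_qg f K C N g y x HQ Hg)) with (u := t0) as [t [Ht Hd]].
  { destruct Hg as [_ [G0 _]]. destruct Hb as [_ [B0 _]]. simpl. rewrite G0, B0. auto. }
  { destruct Hg as [_ [_ G1]]. destruct Hb as [_ [_ B1]]. simpl. rewrite G1, B1. auto. }
  { auto. }
  pose proof (gp_le_pt e y x g t Hg Ht) as G. rewrite gp_sym in G.
  destruct (Hq e (g t)) as [Q1 _].
  pose proof (div_le _ _ K ltac:(lra) G).
  pose proof (dtri (f e) (beta t0) (f (g t))).
  unfold RH. lra.
Qed.

Lemma UB {X Y : MetricSpace} (f : X -> Y) K C N : geodesic_space X -> geodesic_space Y ->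
  QIdata f K C N -> forall e x y,
  (gromov_prod (f e) (f x) (f y) - c0 N - RH N K C - C) / K - K * (DD N + 2 * RH N K C + C) / 2
    <= gromov_prod e x y.
Proof. intros HX HY HQ e x y. pose proof HQ as (HK & HC & Hq & HN & Hst).
  pose proof (HN 3 0 ltac:(lra) ltac:(lra)). pose proof (HN K C HK HC).
  assert (HE : 0 <= K * (DD N + 2 * RH N K C + C) / 2).
  { unfold DD, RH. apply Rmult_le_pos; [|lra]. apply Rmult_le_pos; lra. }
  pose proof (gp_nonneg e x y).
  set (s := gromov_prod (f e) (f x) (f y) - c0 N).
  destruct (Rlt_or_le s 0) as [Hs|Hs].
  - assert ((s - RH N K C - C) / K <= 0) by (apply div_nonpos; unfold RH in *; lra).
    unfold s in *. lra.
  - destruct (Hst e x) as [ax [Hax Hmx]]. destruct (Hst e y) as [ay [Hay Hmy]].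
    pose proof (fellow (f e) (f x) (f y) N ax ay s HY HN Hax Hmx Hay Hmy Hs ltac:(unfold s, c0 in *; lra)) as F.
    pose proof (gp_le_d (f e) (f x) (f y)). pose proof (gp_le_d (f e) (f y) (f x)).
    rewrite gp_sym in H3.
    destruct (HX e x) as [gx Hgx]. destruct (HX e y) as [gy Hgy].
    destruct (rev_haus N ax (fun t => f (gx t)) (dist (f e) (f x)) K C 0 (dist e x) HN HK HC
       (geo_is ax _ _ Hax) Hmx (img_qg f K C N gx e x HQ Hgx)) with (u := s) as [t1 [Ht1 Hd1]].
    { destruct Hgx as [_ [G0 _]]. destruct Hax as [_ [B0 _]]. simpl. rewrite G0, B0. auto. }
    { destruct Hgx as [_ [_ G1]]. destruct Hax as [_ [_ B1]]. simpl. rewrite G1, B1. auto. }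
    { unfold s, c0 in *; lra. }
    destruct (rev_haus N ay (fun t => f (gy t)) (dist (f e) (f y)) K C 0 (dist e y) HN HK HC
       (geo_is ay _ _ Hay) Hmy (img_qg f K C N gy e y HQ Hgy)) with (u := s) as [t2 [Ht2 Hd2]].
    { destruct Hgy as [_ [G0 _]]. destruct Hay as [_ [B0 _]]. simpl. rewrite G0, B0. auto. }
    { destruct Hgy as [_ [_ G1]]. destruct Hay as [_ [_ B1]]. simpl. rewrite G1, B1. auto. }
    { unfold s, c0 in *; lra. }
    simpl in Hd1, Hd2.
    pose proof (dtri (f (gx t1)) (ax s) (f (gy t2))) as T1.
    pose proof (dtri (ax s) (ay s) (f (gy t2))) as T2.
    rewrite (dsym (f (gx t1)) (ax s)) in T1.
    destruct (Hq (gx t1) (gy t2)) as [Q1 _].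
    pose proof (qi_inv _ _ K C ltac:(lra) Q1) as E.
    pose proof (geo_from ax _ _ s Hax ltac:(unfold s, c0 in *; lra)) as E1.
    pose proof (geo_from ay _ _ s Hay ltac:(unfold s, c0 in *; lra)) as E2.
    pose proof (dtri (f e) (f (gx t1)) (ax s)) as T3.
    pose proof (dtri (f e) (f (gy t2)) (ay s)) as T4.
    rewrite (dsym (f (gx t1)) (ax s)) in T3. rewrite (dsym (f (gy t2)) (ay s)) in T4.
    destruct (Hq e (gx t1)) as [_ Q2]. destruct (Hq e (gy t2)) as [_ Q3].
    rewrite (geo_from gx e x t1 Hgx Ht1) in Q2. rewrite (geo_from gy e y t2 Hgy Ht2) in Q3.
    pose proof (qi_inv2 t1 (s - RH N K C) K C ltac:(lra) ltac:(unfold RH in *; lra)) as I1.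
    pose proof (qi_inv2 t2 (s - RH N K C) K C ltac:(lra) ltac:(unfold RH in *; lra)) as I2.
    pose proof (gp_close e x y gx gy t1 t2 Hgx Hgy Ht1 Ht2) as G.
    assert (Hm : K * dist (gx t1) (gy t2) <= K * (K * (DD N + 2 * RH N K C + C))).
    { apply Rmult_le_compat_l; [lra|]. unfold RH in *. nra. }
    replace (s - RH N K C - C) with (s - RH N K C - C) in I1 by ring.
    assert (dist (gx t1) (gy t2) <= K * (DD N + 2 * RH N K C + C)).
    { eapply Rle_trans; [apply E|]. apply Rmult_le_compat_l; [lra|]. unfold RH in *. lra. }
    unfold s, c0 in *. lra.
Qed.


Lemma sub_geo {Z : MetricSpace} (g : R -> Z) x y u1 u2 : geodesic_from_to g x y ->
  0 <= u1 <= dist x y -> 0 <= u2 <= dist x y ->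
  exists z : R -> Z, geodesic_from_to z (g u1) (g u2) /\
    forall tau, 0 <= tau <= dist (g u1) (g u2) -> exists v, 0 <= v <= dist x y /\ z tau = g v.
Proof. intros Hg H1 H2. pose proof (geo_d g x y u1 u2 Hg H1 H2) as Hd.
  destruct (Rle_dec u1 u2) as [Hle|Hgt].
  - rewrite Rabs_pos_eq' in Hd by lra.
    exists (fun t => g (u1 + t)). unfold geodesic_from_to, is_geodesic. rewrite Hd.
    split; [split; [split|split]|].
    + lra.
    + intros s t Hs Ht. rewrite (geo_d g x y) by (auto; lra). f_equal. ring.
    + f_equal. ring.
    + f_equal. ring.
    + intros tau Ht. exists (u1 + tau). split; [lra|auto].
  - rewrite Rabs_pos_eq'' in Hd by lra.
    exists (fun t => g (u1 - t)). unfold geodesic_from_to, is_geodesic. rewrite Hd.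
    split; [split; [split|split]|].
    + lra.
    + intros s t Hs Ht. rewrite (geo_d g x y) by (auto; lra). rewrite Rabs_minus_sym. f_equal. ring.
    + f_equal. ring.
    + f_equal. ring.
    + intros tau Ht. exists (u1 - tau). split; [lra|auto].
Qed.

Definition NX (N : MorseGauge) K C : MorseGauge :=
  fun K' C' => K * (N (K * K') (K * C' + C) + RH N K C + C).

Lemma NX_gauge {X Y : MetricSpace} (f : X -> Y) K C N : QIdata f K C N -> is_gauge (NX N K C).
Proof. intros (HK & HC & _ & HN & _) K' C' HK' HC'. unfold NX, RH.
  pose proof (HN (K * K') (K * C' + C) ltac:(nra) ltac:(nra)). pose proof (HN K C HK HC).
  apply Rmult_le_pos; lra. Qed.

Lemma X_morse {X Y : MetricSpace} (f : X -> Y) K C N : QIdata f K C N ->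
  forall (g : R -> X) x y, geodesic_from_to g x y -> is_morse (NX N K C) g (dist x y).
Proof. intros HQ g x y Hg K' C' s a b HK' HC' Hqs [u1 [Hu1 Ha]] [u2 [Hu2 Hb]] t Ht.
  pose proof HQ as (HK & HC & Hq & HN & Hst).
  destruct (sub_geo g x y u1 u2 Hg Hu1 Hu2) as [z [Hz Hzin]].
  destruct (Hst (g u1) (g u2)) as [beta [Hb' Hbm]].
  pose proof (img_qg2 f K C N s K' C' a b HQ HK' HC' Hqs) as Hfq.
  destruct (Hbm (K * K') (K * C' + C) (fun t => f (s t)) a b ltac:(nra) ltac:(nra) Hfq) with (t := t)
    as [v [Hv Hdv]].
  { simpl. rewrite Ha. apply (on_img0 beta _ _ Hb'). }
  { simpl. rewrite Hb. apply (on_img1 beta _ _ Hb'). }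
  { auto. }
  destruct (rev_haus N beta (fun t => f (z t)) (dist (f (g u1)) (f (g u2))) K C 0 (dist (g u1) (g u2))
     HN HK HC (geo_is beta _ _ Hb') Hbm (img_qg f K C N z _ _ HQ Hz)) with (u := v) as [tau [Htau Hd]].
  { destruct Hz as [_ [G0 _]]. destruct Hb' as [_ [B0 _]]. simpl. rewrite G0, B0. auto. }
  { destruct Hz as [_ [_ G1]]. destruct Hb' as [_ [_ B1]]. simpl. rewrite G1, B1. auto. }
  { auto. }
  destruct (Hzin tau Htau) as [w [Hw Hzw]]. simpl in Hd, Hdv. rewrite Hzw in Hd.
  exists w. split; auto.
  destruct (Hq (s t) (g w)) as [Q1 _].
  pose proof (dtri (f (s t)) (beta v) (f (g w))).
  assert (dist (s t) (g w) / K - C <= N (K * K') (K * C' + C) + RH N K C) by (unfold RH; lra).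
  pose proof (qi_inv _ _ K C ltac:(lra) H0). unfold NX. lra.
Qed.

Lemma X_stratum {X Y : MetricSpace} (f : X -> Y) K C N : geodesic_space X -> QIdata f K C N ->
  forall e x : X, morse_stratum_pt (NX N K C) e x.
Proof. intros HX HQ e x. destruct (HX e x) as [g Hg]. exists g. split; auto.
  apply (X_morse f K C N HQ g e x Hg). Qed.


Lemma arch (M : R) : exists n : nat, M <= INR n.
Proof. destruct (archimed M) as [H1 _]. destruct (Z_le_gt_dec 0 (up M)) as [Hz|Hz].
  - exists (Z.to_nat (up M)). rewrite INR_IZR_INZ. rewrite Z2Nat.id by auto. lra.
  - exists 0%nat. simpl. assert (up M < 0)%Z as Hz2 by lia. apply IZR_lt in Hz2. lra. Qed.

Definition fourpt {Z : MetricSpace} (e : Z) (P : Z -> Prop) (d : R) :=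
  forall x y z, P x -> P y -> P z -> Rmin (gromov_prod e x y) (gromov_prod e y z) - d <= gromov_prod e x z.

Lemma fourpt_of {Z : MetricSpace} (e : Z) N : geodesic_space Z -> is_gauge N ->
  fourpt e (morse_stratum_pt N e) (delta N).
Proof. intros HZ HN x y z Hx Hy Hz. apply four_point; auto. Qed.

Lemma Rmin_ge a b m : m <= a -> m <= b -> m <= Rmin a b.
Proof. apply Rmin_glb. Qed.

Lemma bequiv_sym {Z : MetricSpace} (e : Z) u v : bequiv e u v -> bequiv e v u.
Proof. intros H M. destruct (H M) as [n0 Hn]. exists n0. intros i j Hi Hj. rewrite gp_sym. auto. Qed.

Lemma bequiv_trans {Z : MetricSpace} (e : Z) P d a b c : fourpt e P d ->
  (forall n, P (a n)) -> (forall n, P (b n)) -> (forall n, P (c n)) ->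
  bequiv e a b -> bequiv e b c -> bequiv e a c.
Proof. intros H4 Pa Pb Pc Hab Hbc M.
  destruct (Hab (M + d)) as [n1 H1]. destruct (Hbc (M + d)) as [n2 H2].
  exists (Nat.max n1 n2). intros i k Hi Hk.
  pose proof (H4 _ _ _ (Pa i) (Pb (Nat.max n1 n2)) (Pc k)).
  pose proof (H1 i (Nat.max n1 n2) ltac:(lia) ltac:(lia)).
  pose proof (H2 (Nat.max n1 n2) k ltac:(lia) ltac:(lia)).
  pose proof (Rmin_ge _ _ _ H0 H3). lra. Qed.

Lemma liminf_chain {Z : MetricSpace} (e : Z) P d a b c dd r : fourpt e P d -> 0 <= d ->
  (forall n, P (a n)) -> (forall n, P (b n)) -> (forall n, P (c n)) -> (forall n, P (dd n)) ->
  bequiv e a b -> liminf_ge e b c r -> bequiv e c dd -> liminf_ge e a dd (r - 2 * d).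
Proof. intros H4 Hd0 Pa Pb Pc Pd Hab Hbc Hcd eps Heps.
  destruct (Hab r) as [n1 H1]. destruct (Hbc eps Heps) as [n2 H2]. destruct (Hcd r) as [n3 H3].
  set (m := Nat.max n1 (Nat.max n2 n3)).
  exists m. intros i l Hi Hl.
  pose proof (H1 i m ltac:(unfold m; lia) ltac:(unfold m; lia)) as E1.
  pose proof (H2 m m ltac:(unfold m; lia) ltac:(unfold m; lia)) as E2.
  pose proof (H3 m l ltac:(unfold m; lia) ltac:(unfold m; lia)) as E3.
  pose proof (H4 _ _ _ (Pa i) (Pb m) (Pc m)) as F1.
  assert (G1 : r - eps - d <= gromov_prod e (a i) (c m)).
  { pose proof (Rmin_ge (gromov_prod e (a i) (b m)) (gromov_prod e (b m) (c m)) (r - eps) ltac:(lra) E2). lra. }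
  pose proof (H4 _ _ _ (Pa i) (Pc m) (Pd l)) as F2.
  pose proof (Rmin_ge (gromov_prod e (a i) (c m)) (gromov_prod e (c m) (dd l)) (r - eps - d) G1 ltac:(lra)).
  lra. Qed.

Lemma liminf_mono {Z : MetricSpace} (e : Z) a b r r' : liminf_ge e a b r -> r' <= r -> liminf_ge e a b r'.
Proof. intros H Hr eps Heps. destruct (H eps Heps) as [n0 Hn]. exists n0. intros i j Hi Hj.
  pose proof (Hn i j Hi Hj). lra. Qed.

Lemma lin_bequiv {Z W : MetricSpace} (e : Z) (e' : W) u v u' v' K A B : 0 < K ->
  (forall i j, (gromov_prod e (u i) (v j) - A) / K - B <= gromov_prod e' (u' i) (v' j)) ->
  bequiv e u v -> bequiv e' u' v'.
Proof. intros HK Hlin H M. destruct (H (K * (M + B) + A)) as [n0 Hn]. exists n0.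
  intros i j Hi Hj. pose proof (Hn i j Hi Hj).
  pose proof (div_le (K * (M + B) + A - A) (gromov_prod e (u i) (v j) - A) K HK ltac:(lra)).
  replace ((K * (M + B) + A - A) / K) with (M + B) in H1 by (field; lra).
  pose proof (Hlin i j). lra. Qed.

Lemma lin_liminf {Z W : MetricSpace} (e : Z) (e' : W) u v u' v' K A B r : 0 < K ->
  (forall i j, (gromov_prod e (u i) (v j) - A) / K - B <= gromov_prod e' (u' i) (v' j)) ->
  liminf_ge e u v r -> liminf_ge e' u' v' ((r - A) / K - B).
Proof. intros HK Hlin H eps Heps. destruct (H (K * eps) ltac:(nra)) as [n0 Hn]. exists n0.
  intros i j Hi Hj. pose proof (Hn i j Hi Hj).
  pose proof (div_le (r - K * eps - A) (gromov_prod e (u i) (v j) - A) K HK ltac:(lra)).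
  replace ((r - K * eps - A) / K) with ((r - A) / K - eps) in H1 by (field; lra).
  pose proof (Hlin i j). lra. Qed.


Lemma delta_nonneg N : is_gauge N -> 0 <= delta N.
Proof. intros HN. pose proof (HN 3 0 ltac:(lra) ltac:(lra)). unfold delta, c0, DD. lra. Qed.

Lemma str_l {Z : MetricSpace} N1 N2 (e y : Z) : is_gauge N2 -> morse_stratum_pt N1 e y -> morse_stratum_pt (gsum N1 N2) e y.
Proof. intros H2 H. eapply stratum_mono; eauto. apply gsum_l; auto. Qed.
Lemma str_r {Z : MetricSpace} N1 N2 (e y : Z) : is_gauge N1 -> morse_stratum_pt N2 e y -> morse_stratum_pt (gsum N1 N2) e y.
Proof. intros H1 H. eapply stratum_mono; eauto. apply gsum_r; auto. Qed.


Definition LB0 (N : MorseGauge) K C := C + RH N K C + 2 * N 3 0.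
Definition UA (N : MorseGauge) K C := c0 N + RH N K C + C.
Definition UB0 (N : MorseGauge) K C := K * (DD N + 2 * RH N K C + C) / 2.

Lemma LBf {X Y : MetricSpace} (f : X -> Y) K C N : geodesic_space X -> geodesic_space Y ->
  QIdata f K C N -> forall e x y, (gromov_prod e x y - 0) / K - LB0 N K C <= gromov_prod (f e) (f x) (f y).
Proof. intros. replace (gromov_prod e x y - 0) with (gromov_prod e x y) by ring. apply LB; auto. Qed.

Lemma UBf {X Y : MetricSpace} (f : X -> Y) K C N : geodesic_space X -> geodesic_space Y ->
  QIdata f K C N -> forall e x y, (gromov_prod (f e) (f x) (f y) - UA N K C) / K - UB0 N K C <= gromov_prod e x y.
Proof. intros. unfold UA, UB0.
  replace (gromov_prod (f e) (f x) (f y) - (c0 N + RH N K C + C)) with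
    (gromov_prod (f e) (f x) (f y) - c0 N - RH N K C - C) by ring. apply UB; auto. Qed.

Lemma Kpos {X Y : MetricSpace} (f : X -> Y) K C N : QIdata f K C N -> 0 < K.
Proof. intros (HK & _). lra. Qed.

Lemma tr_bequiv {X Y : MetricSpace} (f : X -> Y) K C N e u v : geodesic_space X -> geodesic_space Y ->
  QIdata f K C N -> bequiv e u v -> bequiv (f e) (seqmap f u) (seqmap f v).
Proof. intros HX HY HQ. apply lin_bequiv with (K := K) (A := 0) (B := LB0 N K C).
  - eapply Kpos; eauto.
  - intros i j. unfold seqmap. apply LBf; auto. Qed.

Lemma tr_liminf {X Y : MetricSpace} (f : X -> Y) K C N e u v r : geodesic_space X -> geodesic_space Y ->
  QIdata f K C N -> liminf_ge e u v r -> liminf_ge (f e) (seqmap f u) (seqmap f v) ((r - 0) / K - LB0 N K C).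
Proof. intros HX HY HQ. apply lin_liminf.
  - eapply Kpos; eauto.
  - intros i j. unfold seqmap. apply LBf; auto. Qed.

Lemma bk_bequiv {X Y : MetricSpace} (f : X -> Y) K C N e u v : geodesic_space X -> geodesic_space Y ->
  QIdata f K C N -> bequiv (f e) (seqmap f u) (seqmap f v) -> bequiv e u v.
Proof. intros HX HY HQ. apply lin_bequiv with (K := K) (A := UA N K C) (B := UB0 N K C).
  - eapply Kpos; eauto.
  - intros i j. unfold seqmap. apply UBf; auto. Qed.

Lemma bk_liminf {X Y : MetricSpace} (f : X -> Y) K C N e u v r : geodesic_space X -> geodesic_space Y ->
  QIdata f K C N -> liminf_ge (f e) (seqmap f u) (seqmap f v) r -> liminf_ge e u v ((r - UA N K C) / K - UB0 N K C).
Proof. intros HX HY HQ. apply lin_liminf.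
  - eapply Kpos; eauto.
  - intros i j. unfold seqmap. apply UBf; auto. Qed.

Lemma tr_stratum {X Y : MetricSpace} (f : X -> Y) K C N e u : geodesic_space X -> geodesic_space Y ->
  QIdata f K C N -> conv_at_inf e u -> stratum_seq N (f e) (seqmap f u).
Proof. intros HX HY HQ Hc. split.
  - intros n. apply (img_stratum f K C N HQ).
  - apply (tr_bequiv f K C N e u u HX HY HQ Hc). Qed.

Lemma tr_MB {X Y : MetricSpace} (f : X -> Y) K C N e u : geodesic_space X -> geodesic_space Y ->
  QIdata f K C N -> MB_seq e u -> MB_seq (f e) (seqmap f u).
Proof. intros HX HY HQ [N' [_ [_ Hc]]]. exists N. split; [apply HQ|]. eapply tr_stratum; eauto. Qed.

Lemma X_stratum_seq {X Y : MetricSpace} (f : X -> Y) K C N (e : X) u : geodesic_space X ->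
  QIdata f K C N -> conv_at_inf e u -> stratum_seq (NX N K C) e u.
Proof. intros HX HQ Hc. split; auto. intros n. eapply X_stratum; eauto. Qed.

Lemma MB_conv {Z : MetricSpace} (e : Z) u : MB_seq e u -> conv_at_inf e u.
Proof. intros [_ [_ [_ H]]]. exact H. Qed.

Lemma conv_bequiv {Z : MetricSpace} (e : Z) u : conv_at_inf e u -> bequiv e u u.
Proof. auto. Qed.


Lemma part1 {X Y : MetricSpace} (f : X -> Y) (e : X) : geodesic_space X -> geodesic_space Y ->
  stable_embedding f -> boundary_map_homeo_onto_image f e.
Proof.
  intros HX HY Hst. destruct (stable_QI f Hst) as [K [C [N HQ]]].
  pose proof HQ as (HK & HC & Hq & HN & Hsg).
  assert (PA : forall u, MB_seq e u -> MB_seq (f e) (seqmap f u)) by (intros; eapply tr_MB; eauto).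
  assert (PB : forall u v, MB_seq e u -> MB_seq e v -> bequiv e u v -> bequiv (f e) (seqmap f u) (seqmap f v))
    by (intros; eapply tr_bequiv; eauto).
  assert (PC : forall u v, MB_seq e u -> MB_seq e v -> bequiv (f e) (seqmap f u) (seqmap f v) -> bequiv e u v)
    by (intros; eapply bk_bequiv; eauto).
  split; [exact PA|]. split; [exact PB|]. split; [exact PC|]. split.
  -
    intros U [Usat Uopen]. split.
    + intros u v Hu Hv Huv HUu. apply (Usat (seqmap f u) (seqmap f v)); auto.
    + intros N0 HN0 u [Hus Huc] HUu.
      destruct (Uopen N HN (seqmap f u) (tr_stratum f K C N e u HX HY HQ Huc) HUu) as [r' Hr'].
      exists (K * (r' + LB0 N K C)).
      intros v [Hvs Hvc] [u' [v' [[Hu's Hu'c] [[Hv's Hv'c] [Huu' [Hvv' Hlim]]]]]].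
      apply Hr'.
      * apply (tr_stratum f K C N e v HX HY HQ Hvc).
      * exists (seqmap f u'), (seqmap f v'). split; [apply (tr_stratum f K C N e u' HX HY HQ Hu'c)|].
        split; [apply (tr_stratum f K C N e v' HX HY HQ Hv'c)|].
        split; [apply (tr_bequiv f K C N e u u' HX HY HQ Huu')|].
        split; [apply (tr_bequiv f K C N e v v' HX HY HQ Hvv')|].
        eapply liminf_mono; [apply (tr_liminf f K C N e u' v' _ HX HY HQ Hlim)|].
        right. field. lra.
  - intros V [Vsat Vopen].
    assert (HNX : is_gauge (NX N K C)) by (eapply NX_gauge; eauto).
    exists (fun w => MB_seq (f e) w /\ forall u, MB_seq e u -> bequiv (f e) w (seqmap f u) -> V u).
    split; [split|].
    +
      intros w w' Hw Hw' Hww' [_ HU]. split; auto. intros u Hu Hw'u. apply HU; auto.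
      destruct Hw as [Nw [HNw [Hws _]]]. destruct Hw' as [Nw' [HNw' [Hw's _]]].
      assert (HG: is_gauge (gsum (gsum Nw Nw') N)) by (apply gsum_gauge; [apply gsum_gauge|]; auto).
      apply (bequiv_trans (f e) (morse_stratum_pt (gsum (gsum Nw Nw') N) (f e)) (delta (gsum (gsum Nw Nw') N))
        w w' (seqmap f u) (fourpt_of (f e) _ HY HG)); auto.
      * intros n. apply str_l; auto. apply str_l; auto.
      * intros n. apply str_l; auto. apply str_r; auto.
      * intros n. apply str_r; [apply gsum_gauge; auto|]. apply (img_stratum f K C N HQ).
    + intros M HM w [Hws Hwc] [HwMB HU].
      assert (HG : is_gauge (gsum M N)) by (apply gsum_gauge; auto).
      pose proof (fourpt_of (f e) _ HY HG) as H4.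
      pose proof (delta_nonneg _ HG) as Hd.
      assert (PM : forall z : nat -> Y, (forall n, morse_stratum_pt M (f e) (z n)) -> forall n, morse_stratum_pt (gsum M N) (f e) (z n)).
      { intros z Hz n. apply str_l; auto. }
      assert (PF : forall x : nat -> X, forall n, morse_stratum_pt (gsum M N) (f e) (seqmap f x n)).
      { intros x n. apply str_r; auto. apply (img_stratum f K C N HQ). }
      destruct (classic (exists u0, MB_seq e u0 /\ bequiv (f e) w (seqmap f u0))) as [[u0 [Hu0 Hwu0]]|Hno].
      *
        pose proof (HU u0 Hu0 Hwu0) as HV0.
        destruct (Vopen _ HNX u0 (X_stratum_seq f K C N e u0 HX HQ (MB_conv e u0 Hu0)) HV0) as [r0 Hr0].
        exists (K * (r0 + UB0 N K C) + UA N K C + 2 * delta (gsum M N)).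
        intros v [Hvs Hvc] [w' [v' [[Hw's Hw'c] [[Hv's Hv'c] [Hww' [Hvv' Hlim]]]]]].
        simpl. split; [exists M; split; [auto|split; auto]|].
        intros u Hu Hvu.
        apply Hr0; [apply (X_stratum_seq f K C N e u HX HQ (MB_conv e u Hu))|].
        exists u0, u. split; [apply (X_stratum_seq f K C N e u0 HX HQ (MB_conv e u0 Hu0))|].
        split; [apply (X_stratum_seq f K C N e u HX HQ (MB_conv e u Hu))|].
        split; [apply conv_bequiv, MB_conv; auto|].
        split; [apply conv_bequiv, MB_conv; auto|].
        assert (B1 : bequiv (f e) (seqmap f u0) w').
        { apply (bequiv_trans (f e) _ _ (seqmap f u0) w w' H4 (PF u0) (PM w Hws) (PM w' Hw's)); auto.
          apply bequiv_sym; auto. }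
        assert (B2 : bequiv (f e) v' (seqmap f u)).
        { apply (bequiv_trans (f e) _ _ v' v (seqmap f u) H4 (PM v' Hv's) (PM v Hvs) (PF u)); auto.
          apply bequiv_sym; auto. }
        pose proof (liminf_chain (f e) _ _ (seqmap f u0) w' v' (seqmap f u) _ H4 Hd (PF u0) (PM w' Hw's)
           (PM v' Hv's) (PF u) B1 Hlim B2) as L.
        pose proof (bk_liminf f K C N e u0 u _ HX HY HQ L) as L2.
        eapply liminf_mono; [exact L2|]. right. field. lra.
      *
        apply NNPP. intro Hnot.
        assert (Hn : forall n : nat, exists p : X * nat, forall k, (snd p <= k)%nat ->
                   INR n - 1 - 2 * delta (gsum M N) <= gromov_prod (f e) (w k) (f (fst p))).
        { intro n. apply NNPP. intro Hnn. apply Hnot. exists (INR n).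
          intros v Hv Hnb. apply NNPP. intro HnU. cbv beta in HnU.
          destruct Hnb as [w' [v' [[Hw's Hw'c] [[Hv's Hv'c] [Hww' [Hvv' Hlim]]]]]].
          assert (HvMB : MB_seq (f e) v) by (exists M; split; auto).
          assert (Hex : exists u, MB_seq e u /\ bequiv (f e) v (seqmap f u) /\ ~ V u).
          { apply NNPP. intro Hne. apply HnU. split; auto. intros u Hu Hvu.
            apply NNPP. intro HnV. apply Hne. exists u. auto. }
          destruct Hex as [u [Hu [Hvu _]]].
          destruct Hv as [Hvs _].
          assert (B2 : bequiv (f e) v' (seqmap f u)).
          { apply (bequiv_trans (f e) _ _ v' v (seqmap f u) H4 (PM v' Hv's) (PM v Hvs) (PF u)); auto.
            apply bequiv_sym; auto. }
          destruct (Hww' (INR n)) as [a1 A1].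
          destruct (Hlim 1 ltac:(lra)) as [a2 A2].
          destruct (B2 (INR n)) as [a3 A3].
          apply Hnn. exists (u (Nat.max a1 (Nat.max a2 a3)), a1). simpl. intros k Hk.
          pose proof (A1 k (Nat.max a1 (Nat.max a2 a3)) Hk ltac:(lia)) as E1.
          pose proof (A2 (Nat.max a1 (Nat.max a2 a3)) (Nat.max a1 (Nat.max a2 a3)) ltac:(lia) ltac:(lia)) as E2.
          pose proof (A3 (Nat.max a1 (Nat.max a2 a3)) (Nat.max a1 (Nat.max a2 a3)) ltac:(lia) ltac:(lia)) as E3.
          pose proof (H4 _ _ _ (PM w' Hw's (Nat.max a1 (Nat.max a2 a3))) (PM v' Hv's (Nat.max a1 (Nat.max a2 a3)))
             (PF u (Nat.max a1 (Nat.max a2 a3)))) as F1.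
          pose proof (H4 _ _ _ (PM w Hws k) (PM w' Hw's (Nat.max a1 (Nat.max a2 a3)))
             (PF u (Nat.max a1 (Nat.max a2 a3)))) as F2.
          unfold seqmap in *.
          set (l := Nat.max a1 (Nat.max a2 a3)) in *.
          pose proof (Rmin_ge _ (gromov_prod (f e) (v' l) (f (u l))) (INR n - 1) E2 ltac:(lra)) as M1.
          pose proof (Rmin_ge (gromov_prod (f e) (w k) (w' l)) (gromov_prod (f e) (w' l) (f (u l)))
             (INR n - 1 - delta (gsum M N)) ltac:(lra) ltac:(lra)).
          lra. }
        set (F := fun n => proj1_sig (constructive_indefinite_description _ (Hn n))).
        assert (HF : forall n k, (snd (F n) <= k)%nat ->
                 INR n - 1 - 2 * delta (gsum M N) <= gromov_prod (f e) (w k) (f (fst (F n)))).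
        { intros n. unfold F. destruct (constructive_indefinite_description _ (Hn n)) as [p Hp]. simpl. exact Hp. }
        clearbody F.
        assert (Hfx : conv_at_inf (f e) (seqmap f (fun n => fst (F n)))).
        { intros M0. destruct (arch (M0 + 1 + 2 * delta (gsum M N) + delta (gsum M N))) as [m Hm].
          exists m. intros i j Hi Hj.
          pose proof (HF i (Nat.max (snd (F i)) (snd (F j))) ltac:(lia)) as E1.
          pose proof (HF j (Nat.max (snd (F i)) (snd (F j))) ltac:(lia)) as E2.
          rewrite gp_sym in E1.
          pose proof (H4 _ _ _ (PF (fun n => fst (F n)) i) (PM w Hws (Nat.max (snd (F i)) (snd (F j))))
             (PF (fun n => fst (F n)) j)) as F1.
          unfold seqmap in *. cbv beta in *.
          pose proof (le_INR _ _ Hi). pose proof (le_INR _ _ Hj).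
          pose proof (Rmin_ge (gromov_prod (f e) (f (fst (F i))) (w (Nat.max (snd (F i)) (snd (F j)))))
             (gromov_prod (f e) (w (Nat.max (snd (F i)) (snd (F j)))) (f (fst (F j))))
             (INR m - 1 - 2 * delta (gsum M N)) ltac:(lra) ltac:(lra)).
          lra. }
        apply Hno. exists (fun n => fst (F n)). split.
        -- exists (NX N K C). split; auto. apply (X_stratum_seq f K C N e _ HX HQ).
           apply (bk_bequiv f K C N e _ _ HX HY HQ Hfx).
        -- intros M0. destruct (arch (M0 + 1 + 2 * delta (gsum M N) + delta (gsum M N))) as [m Hm].
           destruct (Hfx (M0 + delta (gsum M N))) as [n1 Hn1].
           exists (Nat.max (Nat.max m n1) (snd (F (Nat.max m n1)))). intros j i Hj Hi.
           pose proof (HF (Nat.max m n1) j ltac:(lia)) as E1.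
           pose proof (Hn1 (Nat.max m n1) i ltac:(lia) ltac:(lia)) as E2.
           pose proof (H4 _ _ _ (PM w Hws j) (PF (fun n => fst (F n)) (Nat.max m n1))
              (PF (fun n => fst (F n)) i)) as F1.
           unfold seqmap in *. cbv beta in *.
           pose proof (le_INR m (Nat.max m n1) ltac:(lia)).
           pose proof (Rmin_ge (gromov_prod (f e) (w j) (f (fst (F (Nat.max m n1)))))
              (gromov_prod (f e) (f (fst (F (Nat.max m n1)))) (f (fst (F i)))) (M0 + delta (gsum M N))
             ltac:(lra) ltac:(lra)).
           lra.
    +
      intros u Hu. split.
      * intros HV. split; [apply PA; auto|]. intros u' Hu' Hfuu'. apply (Vsat u u'); auto.
      * intros [_ H]. apply H; auto. apply conv_bequiv. apply MB_conv. apply PA; auto.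
Qed.


Lemma part2 (G : Group) (S : list G) (X Y : MetricSpace)
     (actX : G -> X -> X) (iota : G -> X) (actY : G -> Y -> Y) (y0 : Y)
     (f : X -> Y) (e : X) :
     geodesic_space X -> geodesic_space Y ->
     cayley_model G S X actX iota ->
     isometric_action G Y actY ->
     (forall g, f (iota g) = actY g y0) ->
     stable_embedding f ->
     forall (g : G) (u t : nat -> X) (w : nat -> Y),
       MB_seq e u -> MB_seq e t -> bequiv e t (seqmap (actX g) u) ->
       MB_seq (f e) w -> bequiv (f e) w (seqmap (actY g) (seqmap f u)) ->
       bequiv (f e) (seqmap f t) w.
Proof.
  intros HX HY [[_ [_ HisoX]] [Hiota [_ Hnet]]] [_ [HmulY HisoY]] Hfi Hst g u t w Hu Ht Htu Hw Hwu.
  destruct (stable_QI f Hst) as [K [C [N HQ]]].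
  pose proof HQ as (HK & HC & Hq & HN & Hsg).
  assert (D0 : forall x, dist (f (actX g x)) (actY g (f x)) <= K + 2 * C).
  { intros x. destruct (Hnet x) as [h Hh].
    assert (E1 : dist (actX g x) (iota (gmul g h)) <= 1/2).
    { rewrite Hiota, HisoX. auto. }
    assert (E2 : f (iota (gmul g h)) = actY g (f (iota h))).
    { rewrite !Hfi. apply HmulY. }
    destruct (Hq (actX g x) (iota (gmul g h))) as [_ Q1].
    destruct (Hq (iota h) x) as [_ Q2]. rewrite (dsym (iota h) x) in Q2.
    pose proof (dtri (f (actX g x)) (f (iota (gmul g h))) (actY g (f x))).
    rewrite E2 in H, Q1. rewrite HisoY in H.
    assert (K * dist (actX g x) (iota (gmul g h)) <= K * (1/2)) by (apply Rmult_le_compat_l; lra).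
    assert (K * dist x (iota h) <= K * (1/2)) by (apply Rmult_le_compat_l; lra).
    lra. }
  destruct Hw as [Nw [HNw [Hws _]]].
  assert (HG : is_gauge (gsum N Nw)) by (apply gsum_gauge; auto).
  pose proof (fourpt_of (f e) _ HY HG) as H4.
  assert (B1 : bequiv (f e) (seqmap f t) (seqmap f (seqmap (actX g) u))).
  { apply (tr_bequiv f K C N e _ _ HX HY HQ Htu). }
  assert (B2 : bequiv (f e) w (seqmap f (seqmap (actX g) u))).
  { intros M. destruct (Hwu (M + (K + 2 * C))) as [n0 Hn]. exists n0. intros i j Hi Hj.
    pose proof (Hn i j Hi Hj). unfold seqmap in *.
    pose proof (gp_pert (f e) (w i) (actY g (f (u j))) (f (actX g (u j)))).
    pose proof (D0 (u j)). rewrite dsym in H1. lra. }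
  apply (bequiv_trans (f e) _ _ (seqmap f t) (seqmap f (seqmap (actX g) u)) w H4).
  - intros n. apply str_l; auto. apply (img_stratum f K C N HQ).
  - intros n. apply str_l; auto. apply (img_stratum f K C N HQ).
  - intros n. apply str_r; auto.
  - exact B1.
  - apply bequiv_sym. exact B2.
Qed.

Theorem corollary2p9 :
  (forall (X Y : MetricSpace) (f : X -> Y) (e : X),
     proper X -> geodesic_space X -> proper Y -> geodesic_space Y ->
     stable_embedding f ->
     boundary_map_homeo_onto_image f e)
  /\
  (forall (G : Group) (S : list G) (X Y : MetricSpace)
     (actX : G -> X -> X) (iota : G -> X) (actY : G -> Y -> Y) (y0 : Y)
     (f : X -> Y) (e : X),
     proper X -> geodesic_space X -> proper Y -> geodesic_space Y ->
     cayley_model G S X actX iota ->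
     isometric_action G Y actY ->
     (forall g, f (iota g) = actY g y0) ->
     stable_embedding f ->
     (* G-equivariance: d f (g . [u]) = g . d f ([u]) *)
     forall (g : G) (u t : nat -> X) (w : nat -> Y),
       MB_seq e u -> MB_seq e t -> bequiv e t (seqmap (actX g) u) ->
       MB_seq (f e) w -> bequiv (f e) w (seqmap (actY g) (seqmap f u)) ->
       bequiv (f e) (seqmap f t) w).
Proof.
  split.
  - intros X Y f e _ HX _ HY Hst. apply part1; auto.
  - intros G S X Y actX iota actY y0 f e _ HX _ HY. apply part2; auto.
Qed.
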